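(* Let $S$ be a set and let $f:2^S\to 2^S$ be monotonic with respect to $\subseteq$. Then $\nu f=\bigcup\{X\in 2^S\mid X \text{ is supported for } f\}$.
   Context: $\nu f$ denotes the greatest fixpoint of $f$ in the complete lattice $(2^S,\subseteq)$. For a binary relation ${\prec}$ on $X$ and $x\in X$, $\prec^{-1}(x)=\{x'\in X\mid x'\prec x\}$. A pair $(X,\prec)$ is a support ordering for $f$ if $X\subseteq S$, ${\prec}\subseteq X\times X$, and $x\in f(\prec^{-1}(x))$ for every $x\in X$. A set $X\subseteq S$ is supported for $f$ if there is some ${\prec}\subseteq X\times X$ such that $(X,\prec)$ is a support ordering for $f$. *)

(* Defs.v *)
Definition subset {S : Type} (A B : S -> Prop) : Prop := forall x, A x -> B x.
Definition set_eq {S : Type} (A B : S -> Prop) : Prop := forall x, A x <-> B x.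

Definition monotonic {S : Type} (f : (S -> Prop) -> (S -> Prop)) : Prop :=
  forall A B, subset A B -> subset (f A) (f B).

Definition is_gfp {S : Type} (f : (S -> Prop) -> (S -> Prop)) (X : S -> Prop) : Prop :=
  set_eq (f X) X /\ (forall Y, set_eq (f Y) Y -> subset Y X).

Definition pred_set {S : Type} (X : S -> Prop) (prec : S -> S -> Prop) (x : S) : S -> Prop :=
  fun x' => X x' /\ prec x' x.

Definition support_ordering {S : Type} (f : (S -> Prop) -> (S -> Prop))
    (X : S -> Prop) (prec : S -> S -> Prop) : Prop :=
  (forall x y, prec x y -> X x /\ X y) /\
  (forall x, X x -> f (pred_set X prec x) x).

Definition supported {S : Type} (f : (S -> Prop) -> (S -> Prop)) (X : S -> Prop) : Prop :=
  exists prec : S -> S -> Prop, support_ordering f X prec.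

Definition union_supported {S : Type} (f : (S -> Prop) -> (S -> Prop)) : S -> Prop :=
  fun x => exists X, supported f X /\ X x.

(* Main.v *)
Require Import Defs.

Theorem corollary2 (S : Type) (f : (S -> Prop) -> (S -> Prop)) :
  monotonic f ->
  forall nu : S -> Prop, is_gfp f nu -> set_eq nu (union_supported f).
Proof.
  intros Hm nu [Hfix Hgr] x. split.
  - intros Hx. exists nu. split; [|exact Hx].
    exists (fun a b => nu a /\ nu b). split.
    + intros a b H; exact H.
    + intros y Hy. apply (Hm nu). intros z Hz. split; auto.
      apply Hfix; exact Hy.
  - intros [X [[prec [H1 H2]] HX]].
    set (Y := fun z => exists Z : S -> Prop, subset Z (f Z) /\ Z z).
    assert (HYp : subset Y (f Y)).
    { intros z [Z [HZ Hz]]. refine (Hm Z Y _ z (HZ z Hz)). intros w Hw. exists Z; auto. }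
    assert (HYf : set_eq (f Y) Y).
    { intros z; split; [|apply HYp].
      intros Hz. exists (f Y). split; [apply Hm; exact HYp | exact Hz]. }
    apply (Hgr Y HYf). exists X. split; auto.
    intros z Hz. apply (Hm (pred_set X prec z)). intros w [Hw _]; exact Hw. auto.
Qed.
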